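(* Let $\ell\ge2$ and $t\ge0$ be integers, $C\subseteq\mathbb{F}_q^n$ a linear code and $A,B\subseteq\mathbb{F}_q^n$ linear codes with $A*B\subseteq C^\perp$, $\dim A>t$, $\mathrm{d}(A^\perp)>t$ and $\mathrm{d}(A)+\mathrm{d}(C)>n$. Let $\mathbf{y}=\mathbf{c}+\mathbf{e}$ with $\mathbf{c}\in C$, $\mathrm{w}(\mathbf{e})=t$, $I_{\mathbf{e}}=\mathrm{supp}(\mathbf{e})$. Let $M_1=\{\mathbf{a}\in A\mid \langle \mathbf{a}*\mathbf{y},\mathbf{b}\rangle=0\ \forall \mathbf{b}\in B\}$, and for $i=2,\dots,\ell$, $M_i=\{\mathbf{a}\in A\mid \langle \mathbf{a}*\mathbf{y}^i,\mathbf{v}\rangle=0\ \forall \mathbf{v}\in (B^{\perp}*C^{i-1})^{\perp}\}$, and $M=\bigcap_{i=1}^\ell M_i$. If $A(I_{\mathbf{e}})=M$, then $$\dim B+\sum_{i=2}^{\ell}\dim (B^\perp*C^{i-1})^\perp\ge t.$$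
   Context: All codes are $\mathbb{F}_q$-linear subspaces of $\mathbb{F}_q^n$. $\mathbf{u}*\mathbf{v}=(u_1v_1,\dots,u_nv_n)$, $\mathbf{u}^i=(u_1^i,\dots,u_n^i)$; $A*B$ is the span of all $\mathbf{a}*\mathbf{b}$; $C^1=C$, $C^i=C*C^{i-1}$. $\langle\mathbf{u},\mathbf{v}\rangle=\sum_iu_iv_i$, $X^\perp$ the dual. $\mathrm{w}$ Hamming weight, $\mathrm{d}$ minimum distance, $\mathrm{supp}(\mathbf{x})=\{i:x_i\ne0\}$. $A(J)=\{\mathbf{a}\in A: a_j=0\ \forall j\in J\}\subseteq\mathbb{F}_q^n$. *)

(* Defs.v *)
From HB Require Import structures.
From mathcomp Require Import all_boot all_order all_algebra.
Set Implicit Arguments. Unset Strict Implicit. Unset Printing Implicit Defensive.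
Import GRing.Theory.
Local Open Scope ring_scope.

Section Codes.
Variables (F : finFieldType) (n : nat).
Local Notation vec := 'rV[F]_n.

Definition smul (u v : vec) : vec := \row_j (u 0 j * v 0 j).
Definition spow (u : vec) (i : nat) : vec := \row_j (u 0 j ^+ i).
Definition inner (u v : vec) : F := \sum_(j < n) u 0 j * v 0 j.

Definition star (A B : {vspace vec}) : {vspace vec} :=
  <<[seq smul ab.1 ab.2 | ab <- enum [pred ab : vec * vec | (ab.1 \in A) && (ab.2 \in B)]]>>%VS.

(* C^0 := span of the all-ones vector (never used), C^1 = C, C^i = C * C^(i-1) *)
Fixpoint cpow (C : {vspace vec}) (i : nat) : {vspace vec} :=
  match i with
  | 0 => <<[:: (const_mx 1 : vec)%R]>>%VS
  | 1 => C
  | i'.+1 => star C (cpow C i')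
  end.

Definition dual (X : {vspace vec}) : {vspace vec} :=
  <<[seq v <- enum vec | [forall x : vec, (x \in X) ==> (inner x v == 0%R)]]>>%VS.

Definition supp (u : vec) : {set 'I_n} := [set j | u 0 j != 0].
Definition weight (u : vec) : nat := #|supp u|.

(* minimum distance; convention d({0}) = n+1 *)
Definition dmin (A : {vspace vec}) : nat :=
  \big[minn/n.+1]_(a : vec | (a \in A) && (a != 0%R)) weight a.

Definition punct_zero (A : {vspace vec}) (J : {set 'I_n}) : {vspace vec} :=
  <<[seq a <- enum vec | (a \in A) && [forall j in J, a 0%R j == 0%R]]>>%VS.

Definition annih (A : {vspace vec}) (u : vec) (V : {vspace vec}) : {vspace vec} :=
  <<[seq a <- enum vec | (a \in A) && [forall v : vec, (v \in V) ==> (inner (smul a u) v == 0%R)]]>>%VS.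

Definition M1 (A B : {vspace vec}) (y : vec) : {vspace vec} := annih A y B.
Definition Mi (A B C : {vspace vec}) (y : vec) (i : nat) : {vspace vec} :=
  annih A (spow y i) (dual (star (dual B) (cpow C i.-1))).
Definition Mall (A B C : {vspace vec}) (y : vec) (l : nat) : {vspace vec} :=
  (M1 A B y :&: \bigcap_(2 <= i < l.+1) Mi A B C y i)%VS.

End Codes.

(* Main.v *)
Require Import Defs.
From mathcomp Require Import all_boot all_order all_algebra.
From mathcomp Require Import zify ring.
Set Implicit Arguments. Unset Strict Implicit. Unset Printing Implicit Defensive.
Import GRing.Theory.
Local Open Scope ring_scope.

Lemma bigmin_le_seq (T : eqType) (r : seq T) (P : pred T) (G : T -> nat) m x :
  x \in r -> P x -> (\big[minn/m]_(i <- r | P i) G i <= G x)%N.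
Proof.
elim: r => [//|i r IH]; rewrite inE big_cons => /orP[/eqP -> ->|xr Px].
  exact: geq_minl.
case: (P i); last exact: IH.
exact: leq_trans (geq_minr _ _) (IH xr Px).
Qed.

Section Aux.
Variable F : finFieldType.

Lemma dim_rV k : \dim (fullv : {vspace 'rV[F]_k}) = k.
Proof. by rewrite dimvf /dim /= mul1n. Qed.

Lemma span_filter_eq k (P : pred 'rV[F]_k) (U : {vspace 'rV[F]_k}) :
  (forall x, P x = (x \in U)) -> <<[seq v <- enum 'rV[F]_k | P v]>>%VS = U.
Proof.
move=> HP; apply/eqP; rewrite eqEsubv; apply/andP; split.
  by apply/span_subvP => x; rewrite mem_filter HP => /andP[].
apply/subvP => x xU; apply: memv_span; by rewrite mem_filter HP xU mem_enum.
Qed.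

Lemma innerE k (u v : 'rV[F]_k) : inner u v = (u *m v^T) 0 0.
Proof. by rewrite /inner !mxE; apply: eq_bigr => j _; rewrite mxE. Qed.

Lemma innerC k (u v : 'rV[F]_k) : inner u v = inner v u.
Proof. by rewrite /inner; apply: eq_bigr => j _; rewrite mulrC. Qed.

Lemma innerZ k (u v : 'rV[F]_k) a : inner u (a *: v) = a * inner u v.
Proof. rewrite /inner mulr_sumr; apply: eq_bigr => j _; rewrite mxE; ring. Qed.

Lemma inner_lin k (u : 'rV[F]_k) (U : {vspace 'rV[F]_k}) v :
  v \in U -> (forall i : 'I_(\dim U), inner u (vbasis U)`_i = 0) -> inner u v = 0.
Proof.
move=> vU H; rewrite (coord_vbasis vU) innerE raddf_sum mulmx_sumr summxE.
apply: big1 => i _; by rewrite -innerE innerZ H mulr0.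
Qed.

Lemma dim_cap_le k (A X Y : {vspace 'rV[F]_k}) :
  (X <= A)%VS -> (Y <= A)%VS -> (\dim X + \dim Y <= \dim A + \dim (X :&: Y))%N.
Proof.
move=> XA YA; rewrite -dimv_sum_cap leq_add2r; apply: dimvS.
by rewrite subv_add XA YA.
Qed.

Lemma bigcap_bound k (A : {vspace 'rV[F]_k}) (r : seq nat)
  (X : nat -> {vspace 'rV[F]_k}) (d : nat -> nat) :
  (forall i, \dim A <= \dim (A :&: X i) + d i)%N ->
  (\dim A <= \dim (A :&: \bigcap_(i <- r) X i) + \sum_(i <- r) d i)%N.
Proof.
move=> H; elim: r => [|i r IH]; first by rewrite !big_nil capvf addn0.
rewrite !big_cons.
have -> : (A :&: (X i :&: \bigcap_(j <- r) X j) =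
           (A :&: X i) :&: (A :&: \bigcap_(j <- r) X j))%VS.
  apply/vspaceP => v; rewrite !memv_cap.
  by case: (v \in A); case: (v \in X i).
have := dim_cap_le (capvSl A (X i)) (capvSl A (\bigcap_(j <- r) X j)).
have := H i; lia.
Qed.

Lemma annih_eq k (A : {vspace 'rV[F]_k}) (u : 'rV[F]_k) (V : {vspace 'rV[F]_k}) :
  let Mx := \matrix_(j < k, m < \dim V) (u 0 j * (vbasis V)`_m 0 j) in
  annih A u V = (A :&: lker (linfun (mulmxr Mx)))%VS.
Proof.
move=> Mx; apply: span_filter_eq => a; rewrite memv_cap memv_ker lfunE /=.
congr (_ && _).
have Ei m : (a *m Mx) 0 m = inner (smul a u) (vbasis V)`_m.
  rewrite !mxE; apply: eq_bigr => j _; by rewrite !mxE mulrA.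
apply/forallP/eqP.
  move=> Hf; apply/rowP => m; rewrite Ei mxE.
  have := Hf (vbasis V)`_m; rewrite vbasis_mem ?mem_nth ?size_tuple //=.
  by move/eqP.
move=> H0 v; apply/implyP => vV; apply/eqP; apply: inner_lin vV _ => m.
by rewrite -Ei H0 mxE.
Qed.

Lemma annih_bound k (A : {vspace 'rV[F]_k}) (u : 'rV[F]_k) (V : {vspace 'rV[F]_k}) :
  (annih A u V <= A)%VS /\ (\dim A <= \dim (annih A u V) + \dim V)%N.
Proof.
rewrite annih_eq; split; first exact: capvSl.
set f := linfun _.
rewrite -[in X in (X <= _)%N](limg_ker_dim f A) leq_add2l.
rewrite -[X in (_ <= X)%N]dim_rV; exact/dimvS/subvf.
Qed.

End Aux.

Theorem theorem3p10 (F : finFieldType) (n l t : nat)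
  (A B C : {vspace 'rV[F]_n}) (c e y : 'rV[F]_n) :
  (2 <= l)%N ->
  (star A B <= dual C)%VS ->
  (t < \dim A)%N ->
  (t < dmin (dual A))%N ->
  (n < dmin A + dmin C)%N ->
  c \in C -> weight e = t -> y = c + e ->
  punct_zero A (supp e) = Mall A B C y l ->
  (t <= \dim B + \sum_(2 <= i < l.+1) \dim (dual (star (dual B) (cpow C i.-1))))%N.
Proof.
move=> _ _ _ dA _ _ we _ HM.
set S := (\sum_(_ <= _ < _) _)%N.
have H1 : (\dim A <= \dim (Mall A B C y l) + (\dim B + S))%N.
  have [M1A M1d] := annih_bound A y B.
  have Hr := @bigcap_bound F n A (index_iota 2 l.+1) (Mi A B C y)
    (fun i => \dim (dual (star (dual B) (cpow C i.-1)))).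
  have {Hr} Hr : (\dim A <= \dim (A :&: \bigcap_(2 <= i < l.+1) Mi A B C y i) + S)%N.
    apply: Hr => i; have [MiA Mid] := annih_bound A (spow y i)
                                    (dual (star (dual B) (cpow C i.-1))).
    by rewrite /Mi (capv_idPr MiA).
  have := dim_cap_le M1A (capvSl A (\bigcap_(2 <= i < l.+1) Mi A B C y i)).
  rewrite capvA (capv_idPl M1A) -/(Mall A B C y l) /M1.
  lia.
set J := supp e.
have tJ : t = #|J| by rewrite -we.
pose H := \matrix_(j < n, i < #|J|) (j == enum_val i)%:R : 'M[F]_(n, #|J|).
pose h : 'Hom('rV[F]_n, 'rV[F]_#|J|) := linfun (mulmxr H).
have hE (a : 'rV[F]_n) i : (a *m H) 0 i = a 0 (enum_val i).
  rewrite mxE (bigD1 (enum_val i)) //= mxE eqxx mulr1 big1 ?addr0 //.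
  by move=> j /negbTE nj; rewrite mxE nj mulr0.
have PZ : punct_zero A J = (A :&: lker h)%VS.
  apply: span_filter_eq => a; rewrite memv_cap memv_ker lfunE /=.
  congr (_ && _); apply/forall_inP/eqP.
    by move=> Hz; apply/rowP => i; rewrite hE mxE; apply/eqP/Hz/enum_valP.
  move=> H0 j jJ; have := hE a (enum_rank_in jJ j).
  by rewrite H0 mxE enum_rankK_in // => <-.
have Hdim := limg_ker_dim h A.
suff : (#|J| <= \dim (h @: A))%N.
  move: Hdim H1; rewrite -PZ HM tJ; set k := \dim (h @: A); set m := \dim (Mall _ _ _ _ _); set D := \dim A. lia.
rewrite leqNgt; apply/negP => Hlt.
set U := (h @: A)%VS in Hlt.
pose G := \matrix_(i < #|J|, m < \dim U) ((vbasis U)`_m 0 i).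
pose g : 'Hom('rV[F]_#|J|, 'rV[F]_(\dim U)) := linfun (mulmxr G).
have Hg := limg_ker_dim g fullv.
have gle : (\dim (g @: fullv) <= \dim U)%N.
  rewrite -[X in (_ <= X)%N](dim_rV F); exact/dimvS/subvf.
have knz : (lker g != 0)%VS.
  apply/eqP => k0; move: Hg; rewrite k0 capv0 dimv0 (dim_rV F); lia.
set x := vpick (lker g).
have xnz : x != 0 by rewrite vpick0.
have xk : x *m G = 0 by have := memv_pick (lker g); rewrite memv_ker lfunE => /eqP.
have xorth a : a \in A -> inner x (a *m H) = 0.
  move=> aA; apply: (@inner_lin F _ x U).
    by have := memv_img h aA; rewrite lfunE.
  move=> m; move: xk => /rowP/(_ m); rewrite !mxE => <-.
  by rewrite /inner; apply: eq_bigr => i _; rewrite mxE.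
pose w := x *m H^T.
have wE j : w 0 j = \sum_i x 0 i * (j == enum_val i)%:R.
  by rewrite mxE; apply: eq_bigr => i _; rewrite !mxE.
have wD : (w \in dual A).
  apply: memv_span; rewrite mem_filter mem_enum andbT.
  apply/forallP => a; apply/implyP => aA.
  rewrite innerE /w trmx_mul trmxK mulmxA -innerE innerC xorth //.
have wnz : w != 0.
  apply/negP => /eqP w0; apply: (negP xnz); apply/eqP/rowP => i.
  have := wE (enum_val i); rewrite w0 mxE (bigD1 i) //= eqxx mulr1 big1 ?addr0.
    by move=> <-; rewrite mxE.
  by move=> i' /negbTE ni; rewrite (inj_eq enum_val_inj) eq_sym ni mulr0.
have wJ : (supp w \subset J).
  apply/subsetP => j; rewrite inE wE; apply: contraR => nj.
  apply/eqP/big1 => i _.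
  have -> : (j == enum_val i) = false.
    by apply/negP => /eqP ej; move: nj; rewrite ej enum_valP.
  by rewrite mulr0.
have : (dmin (dual A) <= weight w)%N.
  rewrite /dmin; apply: bigmin_le_seq; by rewrite ?mem_index_enum // wD wnz.
have := subset_leq_card wJ; rewrite /weight; lia.
Qed.
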